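(* Let $R_1,R_2$ be commutative rings with nonzero identity, $I_1$ an ideal of $R_1$, $I_2$ an ideal of $R_2$, $R=R_1\times R_2$ and $I=I_1\times I_2$. Then (a) $\omega(\Gamma''_I(R))\geq\max\{\omega(\Gamma''_{I_1}(R_1)),\omega(\Gamma''_{I_2}(R_2))\}$; (b) $\chi(\Gamma''_I(R))\geq\max\{\chi(\Gamma''_{I_1}(R_1)),\chi(\Gamma''_{I_2}(R_2))\}$.
   Context: $R_1\times R_2$ has componentwise operations. For a commutative ring $S$ and an ideal $J$ of $S$, $\Gamma''_J(S)$ is the simple undirected graph whose vertex set is $\{x\in S\setminus J : xS+J\neq S\}$, with distinct vertices $x,y$ adjacent if and only if $x\notin yS+J$ and $y\notin xS+J$. $\omega(G)$ is the clique number of $G$ (the number of vertices in a largest complete subgraph) and $\chi(G)$ is the chromatic number of $G$ (the minimal number of colors in a coloring of the vertices in which adjacent vertices get different colors). *)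

(* Defs.v *)
From HB Require Import structures.
From mathcomp Require Import all_boot all_order all_algebra.
From Stdlib Require Import ClassicalEpsilon.
Set Implicit Arguments. Unset Strict Implicit. Unset Printing Implicit Defensive.
Import GRing.Theory.
Local Open Scope ring_scope.

Definition is_ideal (S : comNzRingType) (J : S -> Prop) : Prop :=
  [/\ J 0,
      (forall x y, J x -> J y -> J (x + y)) &
      (forall r x, J x -> J (r * x))].

Definition in_xSJ (S : comNzRingType) (J : S -> Prop) (x y : S) : Prop :=
  exists s j, J j /\ y = x * s + j.

(* vertex set of Gamma''_J(S): x \notin J and xS + J <> S *)
Definition GammaV (S : comNzRingType) (J : S -> Prop) (x : S) : Prop :=
  ~ J x /\ ~ (forall y, in_xSJ J x y).

Definition GammaVtx (S : comNzRingType) (J : S -> Prop) : Type :=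
  { x : S | GammaV J x }.

Definition GammaAdj (S : comNzRingType) (J : S -> Prop)
  (u v : GammaVtx J) : Prop :=
  proj1_sig u <> proj1_sig v /\
  ~ in_xSJ J (proj1_sig v) (proj1_sig u) /\
  ~ in_xSJ J (proj1_sig u) (proj1_sig v).

Inductive enat : Type := Fin of nat | Inf.

Definition ele (a b : enat) : Prop :=
  match a, b with
  | _, Inf => True
  | Inf, Fin _ => False
  | Fin m, Fin n => (m <= n)%N
  end.

Definition emax (a b : enat) : enat :=
  match a, b with
  | Fin m, Fin n => Fin (maxn m n)
  | _, _ => Inf
  end.

Definition has_clique (V : Type) (adj : V -> V -> Prop) (n : nat) : Prop :=
  exists f : 'I_n -> V, injective f /\ (forall i j, i <> j -> adj (f i) (f j)).

Definition colorable (V : Type) (adj : V -> V -> Prop) (k : nat) : Prop :=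
  exists c : V -> 'I_k, forall x y, adj x y -> c x <> c y.

(* clique number: the largest size of a complete subgraph, or Inf if
   there are complete subgraphs of every finite size *)
Definition clique_number (V : Type) (adj : V -> V -> Prop) : enat :=
  match excluded_middle_informative
          (exists n, has_clique adj n /\ ~ has_clique adj n.+1) with
  | left H => Fin (proj1_sig (constructive_indefinite_description _ H))
  | right _ => Inf
  end.

(* chromatic number: least number of colours of a proper colouring,
   or Inf if no finite proper colouring exists *)
Definition chromatic_number (V : Type) (adj : V -> V -> Prop) : enat :=
  match excluded_middle_informative
          (exists n, colorable adj n /\ forall m, colorable adj m -> (n <= m)%N) with
  | left H => Fin (proj1_sig (constructive_indefinite_description _ H))
  | right _ => Inf
  end.

Definition prod_ideal (R1 R2 : comNzRingType) (I1 : R1 -> Prop) (I2 : R2 -> Prop)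
  : (R1 * R2)%type -> Prop := fun p => I1 p.1 /\ I2 p.2.

(* Main.v *)
Require Import Defs.
From mathcomp Require Import all_boot all_order all_algebra.
From Stdlib Require Import Classical ClassicalEpsilon.
Set Implicit Arguments. Unset Strict Implicit. Unset Printing Implicit Defensive.
Import GRing.Theory.
Local Open Scope ring_scope.

Lemma emax_ele a b c : ele a c -> ele b c -> ele (emax a b) c.
Proof.
case: a => [m|]; case: b => [n|]; case: c => [k|] //=.
by move=> h1 h2; rewrite geq_max h1 h2.
Qed.

Lemma has_clique_down (V : Type) (adj : V -> V -> Prop) n m :
  (n <= m)%N -> has_clique adj m -> has_clique adj n.
Proof.
move=> le [f [fi fa]]; exists (fun i => f (widen_ord le i)); split.
  by move=> i j /fi /(congr1 val) /= h; apply: val_inj.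
move=> i j ij; apply: fa => /(congr1 val) /= h; apply: ij; exact: val_inj.
Qed.

Lemma min_ex (P : nat -> Prop) m : P m -> exists n, P n /\ forall k, P k -> (n <= k)%N.
Proof.
elim/ltn_ind: m => m IH Pm.
case: (classic (exists k, (k < m)%N /\ P k)) => [[k [km Pk]]|H].
  exact: (IH k).
exists m; split => // k Pk; rewrite leqNgt; apply/negP => km; apply: H; by exists k.
Qed.

Section Emb.
Variables (V W : Type) (adjV : V -> V -> Prop) (adjW : W -> W -> Prop) (f : V -> W).
Hypothesis fadj : forall u v, adjV u v -> adjW (f u) (f v).
Hypothesis irrW : forall w, ~ adjW w w.

Lemma clique_mono : ele (clique_number adjV) (clique_number adjW).
Proof.
have tr : forall n, has_clique adjV n -> has_clique adjW n.
  move=> n [g [gi ga]]; exists (fun i => f (g i)); split; last first.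
    by move=> i j ij; apply: fadj; apply: ga.
  move=> i j e; case: (eqVneq i j) => // /eqP ij.
  by have := fadj (ga _ _ ij); rewrite e => /irrW.
rewrite /clique_number.
case: (excluded_middle_informative (exists n, has_clique adjW n /\ ~ has_clique adjW n.+1)) => [HW|HW]; last by case: excluded_middle_informative.
case: (constructive_indefinite_description _ HW) => m [cm ncm] /=.
have bnd : forall k, has_clique adjW k -> (k <= m)%N.
  move=> k hk; rewrite leqNgt; apply/negP => km; apply: ncm.
  exact: has_clique_down hk.
case: excluded_middle_informative => [HV|HV].
  case: (constructive_indefinite_description _ HV) => n [cn _] /=.
  exact/bnd/tr.
exfalso; have all : forall n, has_clique adjV n.
  elim => [|n IH].
    by exists (fun i : 'I_0 => False_rect _ (notF (ltn_ord i))); split; case.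
  apply: NNPP => nh; apply: HV; by exists n.
have := bnd _ (tr _ (all m.+1)); by rewrite ltnn.
Qed.

Lemma chrom_mono : ele (chromatic_number adjV) (chromatic_number adjW).
Proof.
have tr : forall k, colorable adjW k -> colorable adjV k.
  move=> k [c hc]; exists (fun x => c (f x)) => x y /fadj; exact: hc.
rewrite /chromatic_number.
case: (excluded_middle_informative (exists n, colorable adjW n /\ forall m, colorable adjW m -> (n <= m)%N)) => [HW|HW]; last by case: excluded_middle_informative.
case: (constructive_indefinite_description _ HW) => m [cm mm] /=.
case: excluded_middle_informative => [HV|HV].
  case: (constructive_indefinite_description _ HV) => n [cn nm] /=.
  exact/nm/tr.
by exfalso; apply: HV; apply: (@min_ex (colorable adjV) m (tr _ cm)).
Qed.
End Emb.

Lemma gamma_irr (S : comNzRingType) (J : S -> Prop) w : ~ @GammaAdj S J w w.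
Proof. by case. Qed.

Section Rings.
Variables (R1 R2 : comNzRingType) (I1 : R1 -> Prop) (I2 : R2 -> Prop).
Hypotheses (h1 : is_ideal I1) (h2 : is_ideal I2).

Definition emb1 (x : GammaVtx I1) : GammaVtx (prod_ideal I1 I2).
Proof.
exists (proj1_sig x, 0 : R2).
case: x => x [nx nall] /=; split; first by case.
move=> H; apply: nall => y; case: (H (y, 0)) => s [j [[Jj _] e]].
exists s.1, j.1; split => //; exact: (congr1 fst e).
Defined.

Definition emb2 (x : GammaVtx I2) : GammaVtx (prod_ideal I1 I2).
Proof.
exists (0 : R1, proj1_sig x).
case: x => x [nx nall] /=; split; first by case.
move=> H; apply: nall => y; case: (H (0, y)) => s [j [[_ Jj] e]].
exists s.2, j.2; split => //; exact: (congr1 snd e).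
Defined.

Lemma emb1_adj u v : GammaAdj u v -> GammaAdj (emb1 u) (emb1 v).
Proof.
case: u v => [x hx] [y hy]; rewrite /GammaAdj /= => [[nxy [n1 n2]]].
split; first by case.
split.
  case=> s [j [[Jj _] e]]; apply: n1; exists s.1, j.1; split => //; exact: (congr1 fst e).
case=> s [j [[Jj _] e]]; apply: n2; exists s.1, j.1; split => //; exact: (congr1 fst e).
Qed.

Lemma emb2_adj u v : GammaAdj u v -> GammaAdj (emb2 u) (emb2 v).
Proof.
case: u v => [x hx] [y hy]; rewrite /GammaAdj /= => [[nxy [n1 n2]]].
split; first by case.
split.
  case=> s [j [[_ Jj] e]]; apply: n1; exists s.2, j.2; split => //; exact: (congr1 snd e).
case=> s [j [[_ Jj] e]]; apply: n2; exists s.2, j.2; split => //; exact: (congr1 snd e).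
Qed.
End Rings.

Theorem corollary2p5 (R1 R2 : comNzRingType) (I1 : R1 -> Prop) (I2 : R2 -> Prop) :
  is_ideal I1 -> is_ideal I2 ->
  ele (emax (clique_number (@GammaAdj R1 I1)) (clique_number (@GammaAdj R2 I2)))
      (clique_number (@GammaAdj (R1 * R2)%type (prod_ideal I1 I2))) /\
  ele (emax (chromatic_number (@GammaAdj R1 I1)) (chromatic_number (@GammaAdj R2 I2)))
      (chromatic_number (@GammaAdj (R1 * R2)%type (prod_ideal I1 I2))).
Proof.
move=> _ _; split; apply: emax_ele.
- exact: (clique_mono (@emb1_adj R1 R2 I1 I2) (@gamma_irr _ _)).
- exact: (clique_mono (@emb2_adj R1 R2 I1 I2) (@gamma_irr _ _)).
- exact: (chrom_mono (@emb1_adj R1 R2 I1 I2)).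
- exact: (chrom_mono (@emb2_adj R1 R2 I1 I2)).
Qed.
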